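(* Let $N$ be a lattice of rank $n$ with basis $\mathbf{e}_1,\ldots,\mathbf{e}_n$, $M$ its dual lattice with dual basis $\mathbf{e}_1^\vee,\ldots,\mathbf{e}_n^\vee$, and let $\mathbf{v}_0,\ldots,\mathbf{v}_n\in N$ with coordinate matrix $V=(\mathbf{v}_0,\ldots,\mathbf{v}_n)=(v_{ij})$ such that $\Sigma=\mathrm{fan}(\mathbf{v}_0,\ldots,\mathbf{v}_n)$ is a fan of $\mathbb{P}(Q)$, i.e. $\sum_{j=0}^n q_j\mathbf{v}_j=0$ and $|\det(\mathbf{v}_1,\ldots,\mathbf{v}_n)|=q_0$, with $Q=(q_0,\ldots,q_n)$ a weights vector (so $q_j=|V_j|$ for all $j$). Let $Q'$ be the reduction of $Q$, $\delta'=\mathrm{lcm}(Q')$, $\delta=\mathrm{lcm}(Q)$, let $\mathbf{n}_j$ be the primitive generator of $\mathbb{R}_{\ge0}\mathbf{v}_j\cap N$, and let $\Delta$ be the polytope of the divisor $H=(\delta'/q'_0)D_0$, namely $\Delta=\{\mathbf{u}\in M\otimes\mathbb{R}:\langle\mathbf{u},\mathbf{n}_0\rangle\geq-\delta'/q'_0,\ \langle\mathbf{u},\mathbf{n}_k\rangle\geq0\ (1\le k\le n)\}$. Then $\Delta=\mathrm{conv}(\mathbf{0},\mathbf{w}_1,\ldots,\mathbf{w}_n)$, where $\mathbf{w}_1,\ldots,\mathbf{w}_n\in M$ are distinct, integral, nonzero vectors whose coordinate matrix $W=(\mathbf{w}_1,\ldots,\mathbf{w}_n)$ in the dual basis is the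 weighted transverse matrix $W=(V^0)^*_Q=((V^0)^{-1})^T\cdot\delta\,\mathrm{diag}(1/q_1,\ldots,1/q_n)$ of $V$, where $V^0=(\mathbf{v}_1,\ldots,\mathbf{v}_n)$. Explicitly, $w_{ik}=\dfrac{\delta\,V^0_{ik}}{q_kV_0}$ for $1\le i,k\le n$, where $V^0_{ik}$ is the cofactor of $v_{ik}$ in $V^0$ and $V_0=\det(V^0)=\pm q_0$.
   Context: A weights vector is an $(n+1)$-tuple of positive integers with gcd $1$; with $d_j=\gcd(q_i:i\neq j)$, $a_j=\mathrm{lcm}(d_i:i\neq j)$, the reduction is $Q'=(q_j/a_j)$. $\mathbb{P}(Q)$ is the weighted projective space $\mathbb{P}^n/((\mu_{q_0}\oplus\cdots\oplus\mu_{q_n})/\Delta)$. $\mathrm{fan}(\mathbf{v}_0,\ldots,\mathbf{v}_n)$ is the collection of cones generated by proper subsets of $\{\mathbf{v}_0,\ldots,\mathbf{v}_n\}$. $V_j$ denotes the determinant of $V$ with column $j$ deleted. $D_0$ is the torus-invariant prime divisor of the ray through $\mathbf{v}_0$. *)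

(* Defs.v *)
From HB Require Import structures.
From mathcomp Require Import all_boot all_order all_algebra.
Set Implicit Arguments. Unset Strict Implicit. Unset Printing Implicit Defensive.
Import Order.TTheory GRing.Theory Num.Theory.
Local Open Scope ring_scope.

Definition weights_vector (n : nat) (Q : 'I_n.+1 -> nat) : Prop :=
  (forall j, (0 < Q j)%N) /\ (\big[gcdn/0%N]_(j < n.+1) Q j = 1)%N.

Definition red_d (n : nat) (Q : 'I_n.+1 -> nat) (j : 'I_n.+1) : nat :=
  \big[gcdn/0%N]_(i < n.+1 | i != j) Q i.
Definition red_a (n : nat) (Q : 'I_n.+1 -> nat) (j : 'I_n.+1) : nat :=
  \big[lcmn/1%N]_(i < n.+1 | i != j) red_d Q i.
Definition reduction (n : nat) (Q : 'I_n.+1 -> nat) (j : 'I_n.+1) : nat :=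
  (Q j %/ red_a Q j)%N.

Definition lcm_tuple (n : nat) (Q : 'I_n.+1 -> nat) : nat :=
  \big[lcmn/1%N]_(j < n.+1) Q j.

Definition intv (R : realFieldType) (n : nat) (x : 'cV[int]_n) : 'cV[R]_n :=
  map_mx (fun z : int => z%:~R) x.

Definition on_ray (R : realFieldType) (n : nat) (v x : 'cV[int]_n) : Prop :=
  exists t : R, 0 <= t /\ intv R x = t *: intv R v.

Definition primitive_generator (R : realFieldType) (n : nat) (v p : 'cV[int]_n) : Prop :=
  [/\ on_ray R v p, p != 0 &
      forall x : 'cV[int]_n, on_ray R v x -> exists k : nat, x = k%:Z *: p].

(* Pairing <u, x> of u in M (x) R (row coordinates in the dual basis) with x in N. *)
Definition pairing (R : realFieldType) (n : nat) (u : 'rV[R]_n) (x : 'cV[int]_n) : R :=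
  (u *m intv R x) 0 0.

Definition in_conv (R : realFieldType) (n m : nat) (P : 'I_m -> 'rV[R]_n) (u : 'rV[R]_n) : Prop :=
  exists l : 'I_m -> R,
    [/\ forall i, 0 <= l i, \sum_i l i = 1 & u = \sum_i l i *: P i].

Definition V0mx (n : nat) (V : 'M[int]_(n, n.+1)) : 'M[int]_n :=
  \matrix_(i, k) V i (lift ord0 k).

(* Main.v *)
Require Import Defs.
From HB Require Import structures.
From mathcomp Require Import all_boot all_order all_algebra.
From mathcomp Require Import ring lra.
Import Order.TTheory GRing.Theory Num.Theory.

Section NT.
Variables (n : nat) (Q : 'I_n.+1 -> nat).
Hypothesis hW : weights_vector Q.

Lemma d_dvd (j i : 'I_n.+1) : i != j -> red_d Q j %| Q i.
Proof. by move=> hij; apply: (biggcdn_inf i) => //. Qed.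

Lemma coprime_dq j : coprime (red_d Q j) (Q j).
Proof.
case: hW => _ h1; move: h1; rewrite (bigD1 j) //= => h1.
by rewrite /coprime gcdnC; apply/eqP; exact: h1.
Qed.

Lemma coprime_dd i j : i != j -> coprime (red_d Q i) (red_d Q j).
Proof.
move=> hij; rewrite coprime_sym; apply: (@coprime_dvdl _ (Q i)); first exact: d_dvd.
by rewrite coprime_sym; exact: coprime_dq.
Qed.

Lemma a_dvd_q j : red_a Q j %| Q j.
Proof. apply/dvdn_biglcmP => i hi; apply: d_dvd; by rewrite eq_sym. Qed.

Lemma coprime_ad j : coprime (red_a Q j) (red_d Q j).
Proof.
rewrite /red_a; apply: (big_ind (fun x => coprime x (red_d Q j))).
- exact: coprime1n.
- move=> x y hx hy; apply: (@coprime_dvdl _ (x * y)).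
    by rewrite dvdn_lcm dvdn_mulr ?dvdn_mull.
  by rewrite coprimeMl hx hy.
- move=> i hi; exact: coprime_dd.
Qed.

Definition Ld := \big[lcmn/1]_(i < n.+1) red_d Q i.

Lemma ad_eq j : red_a Q j * red_d Q j = Ld.
Proof.
rewrite /Ld (bigD1 j) //=.
have := muln_lcm_gcd (red_d Q j) (red_a Q j).
by rewrite gcdnC (eqP (coprime_ad j)) muln1 mulnC => <-.
Qed.

Lemma q_eq j : Q j = reduction Q j * red_a Q j.
Proof. by rewrite /reduction divnK // a_dvd_q. Qed.

Hypothesis hn : (0 < n)%N.

Lemma other (i : 'I_n.+1) : exists j : 'I_n.+1, j != i.
Proof.
case: (unliftP ord0 i) => [k ->|->].
  by exists ord0; apply: neq_lift.
by exists (lift ord0 (Ordinal hn)); rewrite eq_sym; apply: neq_lift.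
Qed.

Lemma d_dvd_delta i : red_d Q i %| lcm_tuple Q.
Proof.
have [j hj] := other i.
apply: (dvdn_trans (d_dvd _ _ hj)); exact: biglcmn_sup.
Qed.

Lemma Ld_dvd : Ld %| lcm_tuple Q.
Proof. apply/dvdn_biglcmP => i _; exact: d_dvd_delta. Qed.

Lemma delta_eq : lcm_tuple Q = lcm_tuple (reduction Q) * Ld.
Proof.
apply/eqP; rewrite eqn_dvd; apply/andP; split.
  apply/dvdn_biglcmP => j _; rewrite q_eq; apply: dvdn_mul.
    exact: biglcmn_sup.
  by rewrite -(ad_eq j) dvdn_mulr.
rewrite -(divnK Ld_dvd); apply: dvdn_mul => //.
apply/dvdn_biglcmP => j _; rewrite dvdn_divRL ?Ld_dvd //.
rewrite -(ad_eq j) mulnA -q_eq Gauss_dvd; last by rewrite coprime_sym coprime_dq.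
by rewrite (biglcmn_sup j) // d_dvd_delta.
Qed.

End NT.
Local Open Scope ring_scope.

Section LA.
Variables (n : nat) (V : 'M[int]_(n, n.+1)) (Q : 'I_n.+1 -> nat).
Hypothesis hW : weights_vector Q.
Hypothesis hrel : \sum_(j < n.+1) (Q j)%:Z *: col j V = 0.
Hypothesis hdet : `|\det (V0mx V)| = (Q ord0)%:Z.

Definition qv : 'cV[int]_n := \col_k (Q (lift ord0 k))%:Z.

Lemma q_gt0 j : (0 < Q j)%N.
Proof. by case: hW. Qed.

Lemma D_neq0 : \det (V0mx V) != 0.
Proof.
apply/eqP => h; have := q_gt0 ord0; rewrite -ltz_nat -hdet h normr0.
by rewrite ltxx.
Qed.

Lemma absD : `|\det (V0mx V)|%N = Q ord0.
Proof. by apply/eqP; rewrite -eqz_nat abszE hdet. Qed.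

Lemma relE i : (Q ord0)%:Z * V i ord0 = - \sum_k V0mx V i k * (Q (lift ord0 k))%:Z.
Proof.
have := congr1 (fun M : 'cV[int]_n => M i 0) hrel; rewrite /= summxE big_ord_recl !mxE. idtac.
move/eqP; rewrite addr_eq0 => /eqP ->; congr (- _).
apply: eq_bigr => k _; rewrite !mxE mulrC //.
Qed.

Lemma Arel : V0mx V *m qv = - (Q ord0)%:Z *: col ord0 V.
Proof.
apply/matrixP => i j; rewrite (ord1 j) !mxE mulNr relE opprK.
by apply: eq_bigr => k _; rewrite !mxE.
Qed.

Definition phi (l : 'I_n) := (\adj (V0mx V) *m col ord0 V) l 0.

Lemma phi_rel (l : 'I_n) : \det (V0mx V) * (Q (lift ord0 l))%:Z = - ((Q ord0)%:Z * phi l).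
Proof.
have := congr1 (mulmx (\adj (V0mx V))) Arel.
rewrite mulmxA mul_adj_mx mul_scalar_mx -scalemxAr => /(congr1 (fun M : 'cV[int]_n => M l 0)).
move=> h; rewrite /qv !mxE in h; by rewrite h /phi mxE mulNr.
Qed.

Lemma abs_phi (l : 'I_n) : `|phi l|%N = Q (lift ord0 l).
Proof.
have := congr1 absz (phi_rel l); rewrite abszN !abszM absD /= => /eqP.
by rewrite eqn_pmul2l ?q_gt0 // => /eqP.
Qed.

Definition Ml (l : 'I_n) : 'M[int]_n :=
  \matrix_(i, k) if k == l then V i ord0 else V0mx V i k.

Lemma det_Ml l : \det (Ml l) = phi l.
Proof.
rewrite (expand_det_col _ l) /phi mxE; apply: eq_bigr => i _.
rewrite !mxE eqxx mulrC; congr (_ * _).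
rewrite /cofactor; congr (_ * \det _); apply/matrixP => a b; rewrite !mxE.
by rewrite eq_sym (negbTE (neq_lift _ _)).
Qed.

End LA.
Local Open Scope ring_scope.

Section LR.
Variables (R : realFieldType) (n : nat) (V : 'M[int]_(n, n.+1)) (Q : 'I_n.+1 -> nat).
Hypothesis hW : weights_vector Q.
Hypothesis hrel : \sum_(j < n.+1) (Q j)%:Z *: col j V = 0.
Hypothesis hdet : `|\det (V0mx V)| = (Q ord0)%:Z.

Local Notation A := (V0mx V).
Local Notation AR := (map_mx (fun z : int => z%:~R : R) (V0mx V)).
Local Notation D := (\det (V0mx V)).
Local Notation dl := (lcm_tuple Q).

Definition wv (k : 'I_n) : 'rV[R]_n :=
  \row_i ((dl%:R * (cofactor A i k)%:~R) / ((Q (lift ord0 k))%:R * D%:~R)).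

Lemma DR_neq0 : (D%:~R : R) != 0.
Proof. by rewrite intr_eq0 (@D_neq0 n V Q hW hdet). Qed.

Lemma qR_neq0 j : ((Q j)%:R : R) != 0.
Proof. by rewrite pnatr_eq0 -lt0n (@q_gt0 n Q hW). Qed.

Lemma dl_gt0 : (0 < dl)%N.
Proof.
rewrite /lcm_tuple; apply: (big_ind (fun x => 0 < x)%N) => // [x y hx hy|i _].
  by rewrite lcmn_gt0 hx hy.
exact: (@q_gt0 n Q hW).
Qed.

Lemma dlR_neq0 : (dl%:R : R) != 0.
Proof. by rewrite pnatr_eq0 -lt0n dl_gt0. Qed.

Lemma adjR : \adj AR = map_mx (fun z : int => z%:~R : R) (\adj A).
Proof. by rewrite map_mx_adj. Qed.

Lemma wAR k m : (wv k *m AR) 0 m = if k == m then dl%:R / (Q (lift ord0 k))%:R else 0.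
Proof.
have h : \sum_i ((cofactor A i k)%:~R : R) * (A i m)%:~R = (D *+ (k == m))%:~R.
  transitivity (((\adj A *m A) k m)%:~R : R).
    by rewrite mxE rmorph_sum; apply: eq_bigr => i _; rewrite !mxE [in RHS]rmorphM.
  by rewrite mul_adj_mx mxE.
rewrite mxE.
transitivity (dl%:R / ((Q (lift ord0 k))%:R * D%:~R) *
   \sum_i ((cofactor A i k)%:~R : R) * (A i m)%:~R).
  rewrite mulr_sumr; apply: eq_bigr => i _; rewrite !mxE; ring.
rewrite h; case: eqP => _; last by rewrite mulr0n mulr0.
have := DR_neq0; have := qR_neq0 (lift ord0 k) => h1 h2.
by rewrite mulr1n; field; rewrite h1 h2.
Qed.


Lemma pair_lift u k : pairing u (col (lift ord0 k) V) = (u *m AR) 0 k.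
Proof. by rewrite /pairing /intv !mxE; apply: eq_bigr => i _; rewrite !mxE. Qed.

Lemma pair0 u : pairing u (col ord0 V) * (Q ord0)%:R =
  - \sum_k (u *m AR) 0 k * (Q (lift ord0 k))%:R.
Proof.
rewrite /pairing /intv mxE mulr_suml.
transitivity (\sum_i u 0 i * (((Q ord0)%:Z * V i ord0)%:~R : R)).
  by apply: eq_bigr => i _; rewrite !mxE intrM -mulrA [X in _ * X]mulrC.
under eq_bigr => i _ do rewrite (@relE n V Q hrel) rmorphN rmorph_sum mulrN mulr_sumr.
rewrite sumrN exchange_big /=; congr (- _); apply: eq_bigr => k _.
rewrite mxE mulr_suml; apply: eq_bigr => i _; rewrite !mxE rmorphM mulrA //.
Qed.

Lemma wv_row k : wv k =
  (dl%:R / ((Q (lift ord0 k))%:R * D%:~R)) *: row k (\adj AR).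
Proof. by apply/rowP => i; rewrite adjR !mxE mulrAC. Qed.

Lemma decomp u : u = \sum_k ((u *m AR) 0 k * (Q (lift ord0 k))%:R / dl%:R) *: wv k.
Proof.
have hD := DR_neq0; have hd := dlR_neq0.
transitivity (((D%:~R)^-1 *: (u *m AR)) *m \adj AR).
  rewrite -scalemxAl -mulmxA mul_mx_adj det_map_mx mul_mx_scalar scalerA.
  by rewrite mulVf // scale1r.
rewrite mulmx_sum_row; apply: eq_bigr => k _.
rewrite wv_row scalerA !mxE; congr (_ *: _).
have := qR_neq0 (lift ord0 k) => hq.
by field; rewrite hq hD hd.
Qed.

Lemma wv_pair0 k : pairing (wv k) (col ord0 V) = - dl%:R / (Q ord0)%:R.
Proof.
have hq := qR_neq0 ord0.
apply: (mulIf hq); rewrite pair0 mulfVK // (bigD1 k) //= big1 => [|m hm].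
  by rewrite addr0 wAR eqxx mulfVK ?qR_neq0.
by rewrite wAR eq_sym (negbTE hm) mul0r.
Qed.


Definition isZ (r : R) := exists z : int, r = z%:~R.

Lemma isZ_int (z : int) : isZ z%:~R.
Proof. by exists z. Qed.
Lemma isZ_nat (m : nat) : isZ m%:R.
Proof. by exists m%:Z. Qed.
Lemma isZ_add a b : isZ a -> isZ b -> isZ (a + b).
Proof. by move=> [x ->] [y ->]; exists (x + y); rewrite intrD. Qed.
Lemma isZ_mul a b : isZ a -> isZ b -> isZ (a * b).
Proof. by move=> [x ->] [y ->]; exists (x * y); rewrite intrM. Qed.
Lemma isZ_opp a : isZ a -> isZ (- a).
Proof. by move=> [x ->]; exists (- x); rewrite rmorphN. Qed.
Lemma isZ_sum (F : 'I_n -> R) : (forall i, isZ (F i)) -> isZ (\sum_i F i).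
Proof.
move=> h; apply: (big_ind isZ) => //; first by exists 0.
exact: isZ_add.
Qed.

Lemma isZ_abs (z : int) r : isZ (z%:~R * r) -> isZ ((`|z|%N)%:R * r).
Proof.
case: z => m //= h.
by rewrite NegzE rmorphN mulNr in h; have := isZ_opp _ h; rewrite opprK.
Qed.

Lemma int_mx (M : 'M[int]_n) (x : 'rV[R]_n) :
  (forall j, isZ ((x *m map_mx (fun z : int => z%:~R : R) M) 0 j)) ->
  forall i, isZ ((\det M)%:~R * x 0 i).
Proof.
move=> h i.
have e : (\det M)%:~R *: x = (x *m map_mx (fun z : int => z%:~R : R) M) *m
                              map_mx (fun z : int => z%:~R : R) (\adj M).
  by rewrite -mulmxA -map_mxM mul_mx_adj map_scalar_mx mul_mx_scalar.
have := congr1 (fun X : 'rV[R]_n => X 0 i) e; rewrite /= mxE => ->.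
rewrite mxE; apply: isZ_sum => j; apply: isZ_mul => //.
rewrite mxE; exact: isZ_int.
Qed.

Lemma bez r : (forall j, isZ ((Q j)%:R * r)) -> isZ r.
Proof.
move=> h; case: hW => _ h1.
have : isZ ((\big[gcdn/0%N]_(j < n.+1) Q j)%:R * r).
  apply: (big_ind (fun g => isZ (g%:R * r))) => //; first by exists 0; rewrite mul0r.
  move=> a b [x hx] [y hy]; have [u [v huv]] := Bezoutz a b.
  exists (u * x + v * y).
  have -> : (gcdn a b)%:R = ((u * a + v * b)%:~R : R) by rewrite huv.
  have -> : (u * x + v * y)%:~R = (u%:~R * x%:~R + v%:~R * y%:~R : R) by rewrite rmorphD !rmorphM.
  by rewrite -hx -hy intrD !intrM mulrDl -!mulrA.
by rewrite h1 mul1r.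
Qed.

Lemma isZ_dlq j : isZ (dl%:R / (Q j)%:R).
Proof.
have hd : (Q j %| dl)%N by apply: biglcmn_sup.
rewrite -(divnK hd) natrM mulfK ?qR_neq0 //; exact: isZ_nat.
Qed.

Lemma isZ_wAR k m : isZ ((wv k *m AR) 0 m).
Proof. rewrite wAR; case: eqP => _; [exact: isZ_dlq | by exists 0]. Qed.

Lemma Ml_entry x l m : (x *m map_mx (fun z : int => z%:~R : R) (Ml n V l)) 0 m =
  if m == l then pairing x (col ord0 V) else (x *m AR) 0 m.
Proof.
rewrite /pairing /intv !mxE; case: eqP => [->|hne]; rewrite ?mxE;
  apply: eq_bigr => i _; rewrite !mxE ?eqxx //.
by move/eqP/negbTE: hne => ->.
Qed.

Lemma wv_int k i : isZ (wv k 0 i).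
Proof.
apply: bez => j; case: (unliftP ord0 j) => [l ->|->].
  rewrite -(@abs_phi n V Q hW hrel hdet l) -det_Ml; apply: isZ_abs; apply: int_mx => m.
  rewrite Ml_entry; case: eqP => _; last exact: isZ_wAR.
  rewrite wv_pair0 mulNr; apply: isZ_opp; exact: isZ_dlq.
rewrite -(@absD n V Q hdet); apply: isZ_abs; apply: int_mx => m; exact: isZ_wAR.
Qed.

End LR.
Local Open Scope ring_scope.

Section P.
Variables (R : realFieldType) (n : nat).

Lemma intv_inj : injective (@intv R n).
Proof.
move=> x y /matrixP h; apply/matrixP => i j; have := h i j; rewrite !mxE.
exact: intr_inj.
Qed.

Lemma intv0 : @intv R n 0 = 0.
Proof. by apply/matrixP => i j; rewrite !mxE. Qed.

Lemma intvZ (k : int) (x : 'cV[int]_n) : @intv R n (k *: x) = k%:~R *: intv R x.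
Proof. by apply/matrixP => i j; rewrite !mxE intrM. Qed.

Lemma prim_t (v p : 'cV[int]_n) : primitive_generator R v p ->
  exists2 t : R, 0 < t & intv R p = t *: intv R v.
Proof.
case=> [[t [ht he]] hp _]; exists t => //.
rewrite lt_def ht andbT; apply/eqP => t0; move/eqP: hp; apply.
by apply: intv_inj; rewrite he t0 scale0r intv0.
Qed.

Lemma pair_scale (u : 'rV[R]_n) (v p : 'cV[int]_n) t : intv R p = t *: intv R v ->
  pairing u p = t * @pairing R n u v.
Proof. by rewrite /pairing => ->; rewrite -scalemxAr mxE. Qed.

End P.
Arguments intv_inj {R n} [x1 x2].
Arguments intv0 {R n}.
Arguments intvZ {R n}.
Arguments prim_t {R n} [v p].
Arguments pair_scale {R n} [u v p t].

Section T0.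
Variables (R : realFieldType) (n : nat) (V : 'M[int]_(n, n.+1)) (Q : 'I_n.+1 -> nat).
Hypothesis hW : weights_vector Q.
Hypothesis hrel : \sum_(j < n.+1) (Q j)%:Z *: col j V = 0.
Hypothesis hdet : `|\det (V0mx V)| = (Q ord0)%:Z.
Hypothesis hn : (0 < n)%N.
Variable p0 : 'cV[int]_n.
Hypothesis hp : primitive_generator R (col ord0 V) p0.

Lemma t0_eq t0 : intv R p0 = t0 *: intv R (col ord0 V) ->
  t0 = ((red_d Q ord0)%:R)^-1.
Proof.
move=> ht0.
set d0 := red_d Q ord0.
have hd0 l : (d0 %| Q (lift ord0 l))%N.
  by apply: d_dvd; apply/eqP => /esym; apply/eqP; apply: neq_lift.
have d0_gt0 : (0 < d0)%N.
  have := hd0 (Ordinal hn); rewrite lt0n; apply: contraTneq => ->.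
  by rewrite dvd0n -lt0n (@q_gt0 n Q hW).
have d0R : (d0%:R : R) != 0 by rewrite pnatr_eq0 -lt0n.
have ha i : (d0%:Z %| V i ord0)%Z.
  have hc : coprimez d0%:Z (Q ord0)%:Z.
    by rewrite /coprimez /gcdz /= eqz_nat; exact: (coprime_dq n Q hW ord0).
  rewrite -(Gauss_dvdzl _ hc) mulrC (relE n V Q hrel i) rpredN.
  apply: rpred_sum => k _; apply: dvdz_mull; exact: hd0.
pose x : 'cV[int]_n := \col_i ((V i ord0) %/ d0%:Z)%Z.
have hx : intv R x = (d0%:R)^-1 *: intv R (col ord0 V).
  apply/matrixP => i j; rewrite (ord1 j) !mxE.
  by rewrite -{2}(divzK (ha i)) intrM [X in _ * X]mulrC mulKf.
case: hp => _ hp0 hprim.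
have [k hk] : exists k : nat, x = k%:Z *: p0.
  apply: hprim; exists (d0%:R)^-1; split => //; by rewrite invr_ge0 ler0n.
have hv0 : intv R (col ord0 V) != 0.
  apply/eqP => h0; move/eqP: hp0; apply; apply: (@intv_inj R n).
  by rewrite ht0 h0 scaler0 intv0.
have hkt : k%:R * t0 = (d0%:R)^-1.
  move: hx; rewrite hk intvZ ht0 scalerA => /eqP; rewrite -subr_eq0 -scalerBl.
  by rewrite scalemx_eq0 (negbTE hv0) orbF subr_eq0 => /eqP.
have hk0 : k != 0%N.
  apply/eqP => k0; move: hkt; rewrite k0 mul0r => /eqP; rewrite eq_sym invr_eq0.
  by rewrite (negbTE d0R).
have hve : col ord0 V = (k * d0)%:Z *: p0.
  apply: (@intv_inj R n); rewrite intvZ ht0 scalerA.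
  have -> : ((k * d0)%:Z)%:~R * t0 = (1 : R).
    rewrite [LHS](_ : _ = (k%:R * t0) * d0%:R); last by rewrite (_ : ((k * d0)%:Z)%:~R = (k * d0)%:R :> R) // natrM; ring.
    by rewrite hkt mulVf.
  by rewrite scale1r.
have hdvd l : (k * d0 %| Q (lift ord0 l))%N.
  rewrite -(@abs_phi n V Q hW hrel hdet l).
  have : ((k * d0)%:Z %| phi n V l)%Z.
    by rewrite /phi hve -scalemxAr mxE; apply: dvdz_mulr; exact: dvdzz.
  done.
have hkd : (k * d0 %| d0)%N.
  apply/dvdn_biggcdP => i hi; case: (unliftP ord0 i) hi => [l ->|->] hi.
    exact: hdvd.
  by rewrite eqxx in hi.
have k1 : k = 1%N.
  have := dvdn_leq d0_gt0 hkd; rewrite -{2}[d0]mul1n leq_pmul2r //.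
  by case: k hk0 {hk hkt hve hdvd hkd} => [|[|]].
by move: hkt; rewrite k1 mul1r.
Qed.

End T0.
Local Open Scope ring_scope.

Theorem mainTheorem8 (R : realFieldType) (n : nat)
    (V : 'M[int]_(n, n.+1)) (Q : 'I_n.+1 -> nat)
    (nv : 'I_n.+1 -> 'cV[int]_n) :
  weights_vector Q ->
  \sum_(j < n.+1) (Q j)%:Z *: col j V = 0 ->
  `|\det (V0mx V)| = (Q ord0)%:Z ->
  (forall j, primitive_generator R (col j V) (nv j)) ->
  let delta := lcm_tuple Q in
  let delta' := lcm_tuple (reduction Q) in
  let w : 'I_n -> 'rV[R]_n := fun k =>
    \row_i ((delta%:R * (cofactor (V0mx V) i k)%:~R) /
            ((Q (lift ord0 k))%:R * (\det (V0mx V))%:~R)) in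
  let Delta : 'rV[R]_n -> Prop := fun u =>
    pairing u (nv ord0) >= - (delta'%:R / (reduction Q ord0)%:R) /\
    (forall k : 'I_n, pairing u (nv (lift ord0 k)) >= 0) in
  [/\ forall k i, exists z : int, w k 0 i = z%:~R,
      forall k, w k != 0,
      injective w &
      forall u : 'rV[R]_n,
        Delta u <-> in_conv (fun j : 'I_n.+1 =>
                     match unlift ord0 j with None => 0 | Some k => w k end) u].
Proof.
move=> hW hrel hdet hprim delta delta' w Delta.
have [n0|hn] := posnP n.
  exfalso; subst n; case: (hprim ord0) => _ hp _; by rewrite flatmx0 eqxx in hp.
have hwE : forall k, w k = wv R n V Q k by [].
pose AR := map_mx (fun z : int => z%:~R : R) (V0mx V).
have hq j := qR_neq0 R n Q hW j.
have hq0 j : (0 : R) < (Q j)%:R by rewrite ltr0n (q_gt0 n Q hW).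
have hdl := dlR_neq0 R n Q hW.
have hdl0 : (0 : R) < delta%:R by rewrite ltr0n (dl_gt0 n Q hW).
have [t0 ht0p ht0] := prim_t (hprim ord0).
have t0E := t0_eq R n V Q hW hrel hdet hn (nv ord0) (hprim ord0) t0 ht0.
pose C := t0 * delta%:R / (Q ord0)%:R.
have hC0 : 0 < C by rewrite /C divr_gt0 ?mulr_gt0.
have hC : delta'%:R / (reduction Q ord0)%:R = C.
  have e1 := delta_eq n Q hW hn; have e2 := ad_eq n Q hW ord0.
  have e3 := q_eq n Q ord0.
  have hpos : (0 < red_a Q ord0 * red_d Q ord0)%N.
    rewrite e2; have := dl_gt0 n Q hW; rewrite e1 muln_gt0 => /andP[]//.
  have hpos' : (0 < reduction Q ord0 * red_a Q ord0)%N by rewrite -e3 (q_gt0 n Q hW).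
  move: hpos hpos'; rewrite !muln_gt0 => /andP[ha hd] /andP[hr _].
  rewrite /C t0E /delta e1 -e2 e3 !natrM.
  have ha' : (red_a Q ord0)%:R != 0 :> R by rewrite pnatr_eq0 -lt0n.
  have hd' : (red_d Q ord0)%:R != 0 :> R by rewrite pnatr_eq0 -lt0n.
  have hr' : (reduction Q ord0)%:R != 0 :> R by rewrite pnatr_eq0 -lt0n.
  by field; rewrite ha' hd' hr'.
pose lam (u : 'rV[R]_n) (k : 'I_n) := (u *m AR) 0 k * (Q (lift ord0 k))%:R / delta%:R.
have pnv0 u : pairing u (nv ord0) = - C * \sum_k lam u k.
  rewrite (pair_scale ht0).
  have h := pair0 R n V Q hrel u.
  have -> : pairing u (col ord0 V) =
     - (\sum_k (u *m AR) 0 k * (Q (lift ord0 k))%:R) / (Q ord0)%:R.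
    by rewrite -h mulfK.
  rewrite /lam -mulr_suml /C; have := hq ord0 => hq0'.
  by field; rewrite hq0' hdl.
have pnvk u k : exists2 t : R, 0 < t & pairing u (nv (lift ord0 k)) = t * (u *m AR) 0 k.
  have [t ht ht'] := prim_t (hprim (lift ord0 k)).
  by exists t => //; rewrite (pair_scale ht') pair_lift.
have coef (a : 'I_n -> R) m :
    ((\sum_k a k *: w k) *m AR) 0 m = a m * (delta%:R / (Q (lift ord0 m))%:R).
  rewrite mulmx_suml summxE (bigD1 m) //= big1 => [|k hk].
    by rewrite addr0 -scalemxAl mxE hwE (wAR R n V Q hW hdet); case: eqP.
  rewrite -scalemxAl mxE hwE (wAR R n V Q hW hdet); case: eqP => [e|_]; last by rewrite mulr0.
  by rewrite e eqxx in hk.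
have sumP (f : 'I_n.+1 -> 'rV[R]_n) (l : 'I_n.+1 -> R) :
   \sum_j l j *: (match unlift ord0 j with None => 0 | Some k => w k end) =
   \sum_k l (lift ord0 k) *: w k.
  rewrite big_ord_recl unlift_none scaler0 add0r.
  by apply: eq_bigr => k _; rewrite liftK.
split.
- move=> k i; rewrite hwE; exact: wv_int.
- move=> k; apply/eqP => h0.
  have := coef (fun j => if j == k then 1 else 0) k.
  rewrite (bigD1 k) //= big1 => [|j hj]; last by rewrite (negbTE hj) scale0r.
  rewrite eqxx scale1r addr0 h0 mul0mx mxE mul1r => /esym/eqP.
  by rewrite mulf_eq0 invr_eq0 (negbTE hdl) (negbTE (hq _)).
- move=> k1 k2 he; apply/eqP; apply/negP => hne.
  have := wAR R n V Q hW hdet k1 k1; rewrite -hwE he hwE (wAR R n V Q hW hdet).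
  case: eqP => [e|_]; first by rewrite e eqxx in hne.
  case: eqP => // _.
  move/esym/eqP; by rewrite mulf_eq0 invr_eq0 (negbTE hdl) (negbTE (hq _)).
move=> u; split.
- move=> [h0 hk].
  have hlam k : 0 <= lam u k.
    have [t ht ht'] := pnvk u k; have := hk k; rewrite ht' pmulr_rge0 // => hs.
    by rewrite /lam divr_ge0 ?mulr_ge0 ?ler0n // ltW.
  have hsum : \sum_k lam u k <= 1.
    by move: h0; rewrite pnv0 hC mulNr lerN2 -{2}[C]mulr1 ler_pM2l.
  exists (fun j => match unlift ord0 j with None => 1 - \sum_k lam u k | Some k => lam u k end).
  split.
  + move=> j; case: (unliftP ord0 j) => [k _|_]; first exact: hlam.
    by rewrite subr_ge0.
  + rewrite big_ord_recl unlift_none.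
    rewrite [X in _ + X = _](eq_bigr (fun k => lam u k)) => [|k _]; last by rewrite liftK.
    by rewrite subrK.
  + rewrite (sumP (fun _ => 0)); under eq_bigr => k _ do rewrite liftK.
    rewrite {1}(decomp R n V Q hW hdet u); apply: eq_bigr => k _; by rewrite hwE.
- move=> [l [hl hl1 hu]].
  rewrite (sumP (fun _ => 0)) in hu.
  have hs m : (u *m AR) 0 m = l (lift ord0 m) * (delta%:R / (Q (lift ord0 m))%:R).
    by rewrite hu coef.
  have hlam k : lam u k = l (lift ord0 k).
    rewrite /lam hs; have := hq (lift ord0 k) => hqk; by field; rewrite hqk hdl.
  split.
  + rewrite pnv0 hC; under eq_bigr => k _ do rewrite hlam.
    move: hl1; rewrite big_ord_recl => hl1.
    have -> : \sum_k l (lift ord0 k) = 1 - l ord0 by rewrite -hl1 addrC addKr.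
    have := hl ord0; nra.
  + move=> k; have [t ht ->] := pnvk u k; rewrite hs.
    apply: mulr_ge0; first exact: ltW.
    by apply: mulr_ge0; [exact: hl | apply: divr_ge0; exact: ler0n].
Qed.
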